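(* Let $A\in\mathbb{R}^{n\times n}$ be nonsymmetric and $A_0\in\mathbb{R}^{n\times n}$ symmetric positive definite, and suppose there are constants $c_0,c_1>0$ with $$\mathbf v^TA\mathbf v\ge c_0\,\mathbf v^TA_0\mathbf v\ \ \forall\mathbf v,\qquad \mathbf w^TA\mathbf v\le c_1\sqrt{\mathbf v^TA_0\mathbf v}\sqrt{\mathbf w^TA_0\mathbf w}\ \ \forall \mathbf v,\mathbf w\in\mathbb{R}^n.$$ Let $I_1,\dots,I_{N_s}$ be extension matrices and $P$ a coarse interpolation matrix as described in the context, and define the additive Schwarz preconditioners $B$ and $B_0$ by $$B^{-1}=P A_c^{-1}P^T+\sum_{k=1}^{N_s} I_kA_k^{-1}I_k^T,\qquad B_0^{-1}=P (A^{(0)}_c)^{-1}P^T+\sum_{k=1}^{N_s} I_k(A^{(0)}_k)^{-1}I_k^T,$$ where $A_k=I_k^TAI_k$, $A^{(0)}_k=I_k^TA_0I_k$, $A_c=P^TAP$, $A^{(0)}_c=P^TA_0P$. Assume there exist $\gamma_0,\gamma_1>0$ such that $$\gamma_0\,\mathbf v^TB_0\mathbf v\le \mathbf v^TA_0\mathbf v\le\gamma_1\,\mathbf v^TB_0\mathbf v\quad\text{for all }\mathbf v\in\mathbb{R}^n.$$ Then, with $$\beta_0=\frac{c_0^3}{c_1^2\gamma_1},\qquad \beta_1=\frac{c_1^2}{c_0\gamma_0},$$ we have $$\mathbf v^TB\mathbf v\ge\beta_0\,\mathbf v^TA_0\mathbf v\quad\text{for all }\mathbf v,\qquad \mathbf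 w^TB\mathbf v\le\beta_1\sqrt{\mathbf v^TA_0\mathbf v}\sqrt{\mathbf w^TA_0\mathbf w}\quad\text{for all }\mathbf v,\mathbf w,$$ and the same two estimates hold with $B$ replaced by $B^T$.
   Context: For $k=1,\dots,N_s$, $I_k\in\mathbb{R}^{n\times n_k}$ is a matrix whose columns are distinct standard basis vectors of $\mathbb{R}^n$ (so $I_k\mathbf v_k$ extends a local vector $\mathbf v_k$ by zero outside an index set, and $A_k$, $A_k^{(0)}$ are principal submatrices of $A$, $A_0$). $P\in\mathbb{R}^{n\times n_c}$ is a coarse-to-fine interpolation matrix with full column rank, so that $A_c$ and $A^{(0)}_c$ (and all local matrices) are invertible. *)

(* Defs.v *)
From HB Require Import structures.
From mathcomp Require Import all_boot all_order all_algebra.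
Set Implicit Arguments. Unset Strict Implicit. Unset Printing Implicit Defensive.
Import Order.TTheory GRing.Theory Num.Theory.
Local Open Scope ring_scope.

Definition bform (R : ringType) (n : nat) (M : 'M[R]_n) (w v : 'cV[R]_n) : R :=
  (w^T *m M *m v) 0 0.

(* extension matrix I_k : 'M_(n, m) whose j-th column is the standard basis
   vector e_(f j); distinct columns iff f injective *)
Definition ext_mx (R : ringType) (n m : nat) (f : 'I_m -> 'I_n) : 'M[R]_(n, m) :=
  \matrix_(i < n, j < m) (i == f j)%:R.

Definition asm_inv (R : fieldType) (n nc Ns : nat) (nk : 'I_Ns -> nat)
    (f : forall k : 'I_Ns, 'I_(nk k) -> 'I_n) (P : 'M[R]_(n, nc)) (M : 'M[R]_n)
    : 'M[R]_n :=
  P *m invmx (P^T *m M *m P) *m P^T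
  + \sum_(k < Ns) ext_mx R (f k) *m invmx ((ext_mx R (f k))^T *m M *m ext_mx R (f k))
                  *m (ext_mx R (f k))^T.

Definition asm (R : fieldType) (n nc Ns : nat) (nk : 'I_Ns -> nat)
    (f : forall k : 'I_Ns, 'I_(nk k) -> 'I_n) (P : 'M[R]_(n, nc)) (M : 'M[R]_n)
    : 'M[R]_n := invmx (asm_inv f P M).

(* Main.v *)
Require Import Defs.
From HB Require Import structures.
From mathcomp Require Import all_boot all_order all_algebra.
From mathcomp Require Import ring lra.
Set Implicit Arguments. Unset Strict Implicit. Unset Printing Implicit Defensive.
Import Order.TTheory GRing.Theory Num.Theory.
Local Open Scope ring_scope.

Lemma m11_tr (R : comRingType) (X : 'M[R]_1) : X 0 0 = X^T 0 0.
Proof. by rewrite mxE. Qed.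

Lemma bform_tr (R : comRingType) m (M : 'M[R]_m) w v : bform M w v = bform M^T v w.
Proof. by rewrite /bform m11_tr !trmx_mul trmxK mulmxA. Qed.

Section B.
Variable R : comRingType.
Variable m : nat.
Implicit Types (M : 'M[R]_m) (v w : 'cV[R]_m).

Lemma bformZl M a w v : bform M (a *: w) v = a * bform M w v.
Proof. by rewrite /bform linearZ /= -!scalemxAl mxE. Qed.
Lemma bformZr M a w v : bform M w (a *: v) = a * bform M w v.
Proof. by rewrite /bform -scalemxAr mxE. Qed.
Lemma bformDl M w1 w2 v : bform M (w1 + w2) v = bform M w1 v + bform M w2 v.
Proof. by rewrite /bform linearD /= !mulmxDl mxE. Qed.
Lemma bformDr M w v1 v2 : bform M w (v1 + v2) = bform M w v1 + bform M w v2.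
Proof. by rewrite /bform mulmxDr mxE. Qed.
Lemma bformNl M w v : bform M (- w) v = - bform M w v.
Proof. by rewrite -scaleN1r bformZl mulN1r. Qed.
Lemma bformNr M w v : bform M w (- v) = - bform M w v.
Proof. by rewrite -scaleN1r bformZr mulN1r. Qed.
Lemma bformMD M1 M2 w v : bform (M1 + M2) w v = bform M1 w v + bform M2 w v.
Proof. by rewrite /bform mulmxDr mulmxDl mxE. Qed.
Lemma bform_sum I (r : seq I) (F : I -> 'M[R]_m) w v :
  bform (\sum_(i <- r) F i) w v = \sum_(i <- r) bform (F i) w v.
Proof. by rewrite /bform mulmx_sumr mulmx_suml summxE. Qed.
Lemma bform0l M v : bform M 0 v = 0.
Proof. by rewrite /bform trmx0 !mul0mx mxE. Qed.
End B.

Lemma bform_QMQ (R : comRingType) n m (Q : 'M[R]_(n, m)) (M : 'M[R]_n) w v :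
  bform (Q^T *m M *m Q) w v = bform M (Q *m w) (Q *m v).
Proof. by rewrite /bform trmx_mul !mulmxA. Qed.
Lemma bform_QNQ (R : comRingType) n m (Q : 'M[R]_(n, m)) (N : 'M[R]_m) w v :
  bform (Q *m N *m Q^T) w v = bform N (Q^T *m w) (Q^T *m v).
Proof. by rewrite /bform trmx_mul trmxK !mulmxA. Qed.

Definition psd (R : numDomainType) m (M : 'M[R]_m) := forall v, 0 <= bform M v v.
Definition pd (R : numDomainType) m (M : 'M[R]_m) := forall v, v != 0 -> 0 < bform M v v.
Definition coer (R : numDomainType) m (M G : 'M[R]_m) c :=
  forall v, c * bform G v v <= bform M v v.
Definition bnd (R : numDomainType) m (M G : 'M[R]_m) s :=
  forall v w, 2 * bform M w v <= s * (bform G v v + bform G w w).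

Lemma pd_psd (R : numDomainType) m (M : 'M[R]_m) : pd M -> psd M.
Proof.
move=> H v; have [->|nz] := eqVneq v 0; first by rewrite bform0l.
exact/ltW/H.
Qed.

Lemma lcs (R : realFieldType) m (G : 'M[R]_m) : G^T = G -> psd G ->
  forall t a b, 2 * t * bform G a b <= t^+2 * bform G a a + bform G b b.
Proof.
move=> sG pG t a b; have := pG (t *: a - b).
rewrite !(bformDl, bformDr, bformNl, bformNr, bformZl, bformZr).
rewrite [bform G b a]bform_tr sG => h; nra.
Qed.

Lemma pd_unit (R : realFieldType) m (M : 'M[R]_m) : pd M -> M \in unitmx.
Proof.
move=> H; rewrite -unitmx_tr -row_free_unit -kermx_eq0.
apply/eqP/row_matrixP => i; rewrite row0.
set r := row i (kermx M^T).
have h : r *m M^T = 0 by apply/sub_kermxP; exact: row_sub.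
apply/eqP; apply/negP => /negP nz.
have nz' : r^T != 0 by apply: contra nz => /eqP /(congr1 trmx); rewrite trmxK trmx0 => ->.
have := H _ nz'; rewrite /bform trmxK -mulmxA.
have -> : M *m r^T = 0 by rewrite -[M]trmxK -trmx_mul h trmx0.
by rewrite mulmx0 mxE ltxx.
Qed.

Lemma bGinv_l (R : fieldType) m (G : 'M[R]_m) a y : G^T = G -> G \in unitmx ->
  bform G (invmx G *m a) y = (a^T *m y) 0 0.
Proof. by move=> sG uG; rewrite /bform trmx_mul trmx_inv sG mulmxKV. Qed.

Lemma qinv (R : fieldType) m (G : 'M[R]_m) a b : G^T = G -> G \in unitmx ->
  bform G (invmx G *m a) (invmx G *m b) = bform (invmx G) a b.
Proof. by move=> sG uG; rewrite bGinv_l // /bform mulmxA. Qed.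

Lemma inv_bounds (R : rcfType) m (M G : 'M[R]_m) c s :
  G^T = G -> pd G -> 0 < c -> 0 < s -> coer M G c -> bnd M G s ->
  [/\ M \in unitmx, coer (invmx M) (invmx G) (c / s^+2) & bnd (invmx M) (invmx G) c^-1].
Proof.
move=> sG pG c0 s0 cM bM.
have uG := pd_unit pG; have psG := pd_psd pG.
have pM : pd M.
  move=> v nz; apply: (lt_le_trans _ (cM v)); exact: mulr_gt0 (pG _ nz).
have uM := pd_unit pM.
have key u w : bform M w (invmx M *m u) = (w^T *m u) 0 0.
  by rewrite /bform -mulmxA mulKVmx.
have keyi u w : bform (invmx M) w u = (w^T *m (invmx M *m u)) 0 0.
  by rewrite /bform mulmxA.
have dsym (a b : 'cV[R]_m) : (a^T *m b) 0 0 = (b^T *m a) 0 0.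
  by rewrite m11_tr trmx_mul trmxK.
split => //.
- move=> u; set x := invmx M *m u.
  have h1 := bM (s *: x) (invmx G *m u).
  rewrite bformZr key bformZl bformZr qinv // in h1.
  have e1 : (((invmx G *m u)^T) *m u) 0 0 = bform (invmx G) u u.
    by rewrite dsym /bform mulmxA.
  rewrite e1 in h1.
  have h2 := cM x; rewrite key -/x in h2.
  rewrite keyi -/x dsym.
  set qs := bform (invmx G) u u in h1 *; set qx := bform G x x in h1 h2 *.
  have h3 : qs <= s^+2 * qx.
    have : s * qs <= s * (s^+2 * qx) by nra.
    by rewrite ler_pM2l.
  apply: (le_trans _ h2).
  have -> : c * qx = c / s^+2 * (s^+2 * qx) by field; rewrite ?gt_eqF // ?expf_neq0 // ?gt_eqF // ?s0.
  apply: ler_wpM2l => //; apply: divr_ge0; [exact: ltW | exact: exprn_ge0 (ltW s0)].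
- move=> u w; set x := invmx M *m u.
  have h1 := lcs sG psG c x (invmx G *m u).
  have h2 := lcs sG psG c x (invmx G *m w).
  rewrite [bform G x _]bform_tr sG bGinv_l // qinv // in h1.
  rewrite [bform G x _]bform_tr sG bGinv_l // qinv // in h2.
  have h3 := cM x; rewrite key -/x dsym in h3.
  rewrite keyi -/x.
  set qx := bform G x x in h1 h2 h3.
  set qu := bform (invmx G) u u in h1 *; set qw := bform (invmx G) w w in h2 *.
  set du := (u^T *m x) 0 0 in h1 h3; set dw := (w^T *m x) 0 0 in h2 *.
  have h4 : c^+2 * qx <= qu by nra.
  have : c * (2 * dw) <= c * (c^-1 * (qu + qw)).
    rewrite [c * (c^-1 * _)]mulrA mulfV ?gt_eqF // mul1r; nra.
  by rewrite ler_pM2l.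
Qed.

Lemma bform0M (R : comRingType) m (w v : 'cV[R]_m) : bform 0 w v = 0.
Proof. by rewrite /bform mulmx0 mul0mx mxE. Qed.

Lemma piece (R : rcfType) n m (Q : 'M[R]_(n, m)) (A A0 : 'M[R]_n) c0 c1 :
  (forall x : 'cV_m, Q *m x = 0 -> x = 0) -> A0^T = A0 -> pd A0 -> 0 < c0 -> 0 < c1 ->
  coer A A0 c0 -> bnd A A0 c1 ->
  [/\ coer (Q *m invmx (Q^T *m A *m Q) *m Q^T) (Q *m invmx (Q^T *m A0 *m Q) *m Q^T) (c0 / c1^+2),
      bnd (Q *m invmx (Q^T *m A *m Q) *m Q^T) (Q *m invmx (Q^T *m A0 *m Q) *m Q^T) c0^-1 &
      (Q *m invmx (Q^T *m A0 *m Q) *m Q^T)^T = Q *m invmx (Q^T *m A0 *m Q) *m Q^T].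
Proof.
move=> Qi sA0 pA0 c0p c1p cA bA.
have sG : (Q^T *m A0 *m Q)^T = Q^T *m A0 *m Q by rewrite !trmx_mul trmxK sA0 mulmxA.
have pG : pd (Q^T *m A0 *m Q).
  move=> x nz; rewrite bform_QMQ; apply: pA0; apply: contra nz => /eqP /Qi ->; by [].
have cG : coer (Q^T *m A *m Q) (Q^T *m A0 *m Q) c0 by move=> v; rewrite !bform_QMQ.
have bG : bnd (Q^T *m A *m Q) (Q^T *m A0 *m Q) c1 by move=> v w; rewrite !bform_QMQ.
have [_ cN bN] := inv_bounds sG pG c0p c1p cG bG.
split.
- by move=> v; rewrite !bform_QNQ.
- by move=> v w; rewrite !bform_QNQ.
- by rewrite !trmx_mul trmxK trmx_inv sG mulmxA.
Qed.

Lemma ext_inj (R : comRingType) n m (f : 'I_m -> 'I_n) : injective f ->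
  forall x : 'cV[R]_m, ext_mx R f *m x = 0 -> x = 0.
Proof.
move=> fi x h.
have e : (ext_mx R f)^T *m ext_mx R f = 1%:M.
  apply/matrixP => j k; rewrite !mxE (bigD1 (f j)) //= big1.
    by rewrite !mxE eqxx mul1r addr0 (inj_eq fi).
  by move=> i /negbTE ne; rewrite !mxE ne mul0r.
by rewrite -[x]mul1mx -e -mulmxA h mulmx0.
Qed.

Lemma P_inj (R : fieldType) n nc (P : 'M[R]_(n, nc)) : \rank P = nc ->
  forall x : 'cV[R]_nc, P *m x = 0 -> x = 0.
Proof.
move=> rP x h.
have rf : row_free P^T by rewrite /row_free mxrank_tr rP.
have : x^T *m P^T == 0 by rewrite -trmx_mul h trmx0.
rewrite mulmx_free_eq0 // => /eqP /(congr1 trmx); by rewrite trmxK trmx0.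
Qed.

Lemma amgm (R : rcfType) (a b : R) : 0 <= a -> 0 <= b ->
  2 * (Num.sqrt a * Num.sqrt b) <= a + b.
Proof.
move=> a0 b0; have := sqr_ge0 (Num.sqrt a - Num.sqrt b).
rewrite sqrrB !sqr_sqrtr // => h; lra.
Qed.

Lemma bnd_sqrt (R : rcfType) m (M G : 'M[R]_m) s : psd G -> 0 <= s -> bnd M G s ->
  forall v w, bform M w v <= s * Num.sqrt (bform G v v) * Num.sqrt (bform G w w).
Proof.
move=> pG s0 bM v w.
have hgen al be : 2 * (al * be) * bform M w v <=
    s * (be^+2 * bform G v v + al^+2 * bform G w w).
  have := bM (be *: v) (al *: w).
  rewrite !(bformZl, bformZr) => h; rewrite !expr2; nra.
have a0 := pG v; have b0 := pG w.
set a := bform G v v in hgen a0 *; set b := bform G w w in hgen b0 *.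
set z := bform M w v in hgen *.
have rhs0 : 0 <= s * Num.sqrt a * Num.sqrt b by rewrite !mulr_ge0 ?sqrtr_ge0.
have [zle|zgt] := lerP z 0; first exact: le_trans zle rhs0.
have [a00|ap] := eqVneq a 0.
  have := hgen 1 ((s * b + 1) / z).
  have et : (s * b + 1) / z * z = s * b + 1 by rewrite mulfVK ?gt_eqF.
  rewrite a00 mul1r mulr0 add0r expr1n -mulrA et.
  have : 0 <= s * b by rewrite mulr_ge0.
  move=> h1 h2; exfalso; lra.
have [b00|bp] := eqVneq b 0.
  have := hgen ((s * a + 1) / z) 1.
  have et : (s * a + 1) / z * z = s * a + 1 by rewrite mulfVK ?gt_eqF.
  rewrite b00 mulr1 mulr0 addr0 expr1n mul1r -mulrA et.
  have : 0 <= s * a by rewrite mulr_ge0.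
  move=> h1 h2; exfalso; lra.
have ap' : 0 < a by rewrite lt_def ap a0.
have bp' : 0 < b by rewrite lt_def bp b0.
have key x y : 0 < x -> 0 < y -> 2 * (x * y) * z <= s * (y^+2 * x^+2 + x^+2 * y^+2) ->
    z <= s * x * y.
  move=> xp yp h.
  have : 2 * (x * y) * z <= 2 * (x * y) * (s * x * y) by move: h; rewrite !expr2 => h; nra.
  by rewrite ler_pM2l // !mulr_gt0.
apply: key; rewrite ?sqrtr_gt0 //.
have := hgen (Num.sqrt a) (Num.sqrt b).
by rewrite !sqr_sqrtr.
Qed.

Lemma coer_bnd_sum (R : rcfType) n I (r : seq I) (F G : I -> 'M[R]_n) c s :
  (forall i, [/\ coer (F i) (G i) c, bnd (F i) (G i) s & (G i)^T = G i]) ->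
  [/\ coer (\sum_(i <- r) F i) (\sum_(i <- r) G i) c,
      bnd (\sum_(i <- r) F i) (\sum_(i <- r) G i) s &
      (\sum_(i <- r) G i)^T = \sum_(i <- r) G i].
Proof.
move=> H.
apply: (@big_ind2 _ _ (fun M G => [/\ coer M G c, bnd M G s & G^T = G])).
- split; [by move=> v; rewrite !bform0M mulr0 | | by rewrite trmx0].
  by move=> v w; rewrite !bform0M mulr0 addr0 mulr0.
- move=> M1 G1 M2 G2 [c1 b1 s1] [c2 b2 s2]; split.
  + by move=> v; rewrite !bformMD mulrDr lerD.
  + move=> v w; rewrite !bformMD.
    have := b1 v w; have := b2 v w; lra.
  + by rewrite linearD /= s1 s2.
- by move=> i _; exact: H.
Qed.

Unset Implicit Arguments.

Theorem lemma3p2 (R : rcfType) (n nc Ns : nat) (nk : 'I_Ns -> nat)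
    (f : forall k : 'I_Ns, 'I_(nk k) -> 'I_n) (P : 'M[R]_(n, nc))
    (A A0 : 'M[R]_n) (c0 c1 gamma0 gamma1 : R) :
  (forall k, injective (f k)) ->
  \rank P = nc ->
  A0^T = A0 ->
  (forall v : 'cV[R]_n, v != 0 -> 0 < bform A0 v v) ->
  0 < c0 -> 0 < c1 ->
  (forall v : 'cV[R]_n, bform A v v >= c0 * bform A0 v v) ->
  (forall v w : 'cV[R]_n,
      bform A w v <= c1 * Num.sqrt (bform A0 v v) * Num.sqrt (bform A0 w w)) ->
  0 < gamma0 -> 0 < gamma1 ->
  (forall v : 'cV[R]_n,
      gamma0 * bform (asm f P A0) v v <= bform A0 v v /\
      bform A0 v v <= gamma1 * bform (asm f P A0) v v) ->
  let beta0 := c0 ^+ 3 / (c1 ^+ 2 * gamma1) in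
  let beta1 := c1 ^+ 2 / (c0 * gamma0) in
  let B := asm f P A in
  (forall v : 'cV[R]_n, bform B v v >= beta0 * bform A0 v v) /\
  (forall v w : 'cV[R]_n,
      bform B w v <= beta1 * Num.sqrt (bform A0 v v) * Num.sqrt (bform A0 w w)) /\
  (forall v : 'cV[R]_n, bform B^T v v >= beta0 * bform A0 v v) /\
  (forall v w : 'cV[R]_n,
      bform B^T w v <= beta1 * Num.sqrt (bform A0 v v) * Num.sqrt (bform A0 w w)).
Proof.
move=> fi rP sA0 pA0 c0p c1p cA hA g0 g1 hg beta0 beta1 B.
have psA0 := pd_psd pA0.
have bA : bnd A A0 c1.
  move=> v w; have := hA v w; have := amgm (psA0 v) (psA0 w).
  set x := Num.sqrt _; set y := Num.sqrt _ => h1 h2; nra.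
have cA' : coer A A0 c0 by [].
set S0 := asm_inv f P A0; set S := asm_inv f P A.
have [cS bS sS0] : [/\ coer S S0 (c0 / c1^+2), bnd S S0 c0^-1 & S0^T = S0].
  have [cp bp sp] := piece (P_inj rP) sA0 pA0 c0p c1p cA' bA.
  have [cs bs ss] := @coer_bnd_sum R n 'I_Ns (index_enum 'I_Ns)
    (fun k => ext_mx R (f k) *m invmx ((ext_mx R (f k))^T *m A *m ext_mx R (f k))
                  *m (ext_mx R (f k))^T)
    (fun k => ext_mx R (f k) *m invmx ((ext_mx R (f k))^T *m A0 *m ext_mx R (f k))
                  *m (ext_mx R (f k))^T) (c0 / c1^+2) (c0^-1)
    (fun k => piece (ext_inj (fi k)) sA0 pA0 c0p c1p cA' bA).
  split.
  + by move=> v; rewrite /S /S0 /asm_inv !bformMD mulrDr lerD.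
  + move=> v w; rewrite /S /S0 /asm_inv !bformMD.
    have := bp v w; have := bs v w; lra.
  + by rewrite /S0 /asm_inv linearD /= sp ss.
set B0 := asm f P A0.
have eB0 : B0 = invmx S0 by [].
have sB0 : B0^T = B0 by rewrite eB0 trmx_inv sS0.
have pB0 : pd B0.
  move=> v nz; have [_ h] := hg v; have := pA0 _ nz.
  rewrite -/B0 => h'; have := lt_le_trans h' h.
  by rewrite pmulr_rgt0.
have uB0 := pd_unit pB0.
have uS0 : S0 \in unitmx.
  apply/negPn/negP => nu; move: uB0; rewrite eB0 invmx_out ?inE //.
  by rewrite (negbTE nu).
have pS0 : pd S0.
  move=> v nz; rewrite -[S0]invmxK -eB0 -qinv //; apply: pB0.
  apply: contra nz => /eqP h; apply/eqP.
  by rewrite -(mulKVmx uB0 v) h mulmx0.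
have cp0 : 0 < c0 / c1^+2 by apply: divr_gt0 => //; exact: exprn_gt0.
have sp0 : 0 < c0^-1 by rewrite invr_gt0.
have [_ cB bB] := inv_bounds sS0 pS0 cp0 sp0 cS bS.
rewrite -eB0 in cB bB.
have eK : c0 / c1^+2 / c0^-1^+2 = c0^+3 / c1^+2.
  by field; rewrite ?gt_eqF.
have eK' : (c0 / c1^+2)^-1 = c1^+2 / c0.
  by field; rewrite ?gt_eqF.
rewrite eK in cB; rewrite eK' in bB.
have {cB}cB : coer B B0 (c0^+3 / c1^+2) := cB.
have {bB}bB : bnd B B0 (c1^+2 / c0) := bB.
have Kp : 0 < c0^+3 / c1^+2 by apply: divr_gt0; exact: exprn_gt0.
have K'p : 0 < c1^+2 / c0 by apply: divr_gt0 => //; exact: exprn_gt0.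
have hc v : beta0 * bform A0 v v <= bform B v v.
  apply: le_trans (cB v); have [_ h] := hg v; rewrite -/B0 in h.
  have -> : beta0 * bform A0 v v = c0^+3 / c1^+2 * (bform A0 v v / gamma1).
    by rewrite /beta0; field; rewrite ?gt_eqF.
  apply: ler_wpM2l; first exact: ltW.
  by rewrite (ler_pdivrMr _ _ g1) mulrC.
have b0p : 0 <= beta1 by rewrite /beta1 divr_ge0 ?mulr_ge0 ?exprn_ge0 ?ltW.
have hb : bnd B A0 beta1.
  move=> v w; apply: (le_trans (bB v w)).
  have [h1 _] := hg v; have [h2 _] := hg w; rewrite -/B0 in h1 h2.
  have -> : beta1 * (bform A0 v v + bform A0 w w) =
     c1^+2 / c0 * (gamma0^-1 * (bform A0 v v + bform A0 w w)).
    by rewrite /beta1; field; rewrite ?gt_eqF.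
  apply: ler_wpM2l; first exact: ltW.
  rewrite (ler_pdivlMl _ _ g0) mulrDr; lra.
have hs := bnd_sqrt psA0 b0p hb.
split; first exact: hc.
split; first exact: hs.
split.
  by move=> v; rewrite [bform B^T _ _]bform_tr trmxK hc.
move=> v w; rewrite [bform B^T _ _]bform_tr trmxK; apply: le_trans (hs w v) _.
by rewrite mulrAC.
Qed.
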